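(* Fix $\alpha>0$, $\gamma\in(0,1)$, a constant $\bar\rho_i>0$, a finite nonempty multiset $D_{\rho_i}$ of samples $x=(s,a_i,\mathbf{a}_{-i},s')$ with $s,s'\in S$, and a distribution $p_0$ on $S$. For $\nu_i:S\to\mathbb{R}$ let $$\hat e_{\nu_i}(x)=r(s,a_i,\mathbf{a}_{-i})-\alpha\log\frac{\boldsymbol{\pi}_{-i}(\mathbf{a}_{-i}\mid s)}{\boldsymbol{\pi}^D_{-i}(\mathbf{a}_{-i}\mid s,a_i)}+\gamma\nu_i(s')-\nu_i(s),$$ $$L(\nu_i):=\bar\rho_i\,\alpha\,\hat{\mathbf{E}}_{x\in D_{\rho_i}}\Big[\exp\Big(\tfrac1\alpha\hat e_{\nu_i}(x)-1\Big)\Big]+(1-\gamma)\mathbb{E}_{s_0\sim p_0}[\nu_i(s_0)],$$ $$\tilde{\mathcal{L}}(\nu_i):=\alpha\log\Big(\bar\rho_i\,\hat{\mathbf{E}}_{x\in D_{\rho_i}}\Big[\exp\Big(\tfrac1\alpha\hat e_{\nu_i}(x)\Big)\Big]\Big)+(1-\gamma)\mathbb{E}_{s_0\sim p_0}[\nu_i(s_0)].$$ Then for any minimizer $\tilde\nu_i^*$ of $\tilde{\mathcal{L}}$ (over all functions $S\to\mathbb{R}$), there is a constant $C\in\mathbb{R}$ such that $\tilde\nu_i^*+C$ is a minimizer of $L$.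
   Context: $\hat{\mathbf{E}}_{x\in D}[f(x)]:=\frac{1}{|D|}\sum_{x\in D}f(x)$ is the empirical average over a finite multiset $D$. $r$ is a real-valued reward; $\boldsymbol{\pi}_{-i}(\mathbf{a}_{-i}\mid s)$ and $\boldsymbol{\pi}^D_{-i}(\mathbf{a}_{-i}\mid s,a_i)$ are fixed conditional probability distributions, positive on the samples of $D_{\rho_i}$. *)

(* Defs.v *)
From mathcomp Require Import all_boot all_order all_algebra.
From mathcomp Require Import reals.
From mathcomp Require Import sequences exp.
Set Implicit Arguments. Unset Strict Implicit. Unset Printing Implicit Defensive.
Import Order.TTheory GRing.Theory Num.Theory.
Local Open Scope ring_scope.

Section Defs.
Variables (R : realType) (S Ai Am : finType).

Definition sample := (S * Ai * Am * S)%type.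

Definition s_of (x : sample) : S := x.1.1.1.
Definition ai_of (x : sample) : Ai := x.1.1.2.
Definition am_of (x : sample) : Am := x.1.2.
Definition s'_of (x : sample) : S := x.2.

Definition emp_avg (D : seq sample) (f : sample -> R) : R :=
  (\sum_(x <- D) f x) / (size D)%:R.

Definition expect (p0 : S -> R) (nu : S -> R) : R := \sum_s p0 s * nu s.

Definition is_distr (p : S -> R) : Prop :=
  (forall s, 0 <= p s) /\ \sum_s p s = 1.

Definition ehat (alpha gamma : R) (r : S -> Ai -> Am -> R)
  (pim : S -> Am -> R) (piD : S -> Ai -> Am -> R) (nu : S -> R) (x : sample) : R :=
  r (s_of x) (ai_of x) (am_of x)
  - alpha * ln (pim (s_of x) (am_of x) / piD (s_of x) (ai_of x) (am_of x))
  + gamma * nu (s'_of x) - nu (s_of x).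

Definition Lobj (alpha gamma rho : R) (D : seq sample) (p0 : S -> R)
  r pim piD (nu : S -> R) : R :=
  rho * alpha * emp_avg D (fun x => expR (ehat alpha gamma r pim piD nu x / alpha - 1))
  + (1 - gamma) * expect p0 nu.

Definition Ltilde (alpha gamma rho : R) (D : seq sample) (p0 : S -> R)
  r pim piD (nu : S -> R) : R :=
  alpha * ln (rho * emp_avg D (fun x => expR (ehat alpha gamma r pim piD nu x / alpha)))
  + (1 - gamma) * expect p0 nu.

End Defs.

(* Main.v *)
Require Import Defs.
From mathcomp Require Import all_boot all_order all_algebra.
From mathcomp Require Import reals.
From mathcomp Require Import sequences exp.
From mathcomp Require Import ring lra.
Import Order.TTheory GRing.Theory Num.Theory.
Local Open Scope ring_scope.


Lemma aux_le (R : realType) (a rho Ev : R) : 0 < a -> 0 < rho -> 0 < Ev ->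
  a * ln (rho * Ev) <= rho * a * (Ev * expR (-1)).
Proof.
move=> ha hr hE.
have y0 : 0 < rho * Ev by apply: mulr_gt0.
have := expR_ge1Dx (ln (rho * Ev) - 1).
rewrite expRD lnK ?posrE // => h.
have -> : rho * a * (Ev * expR (-1)) = a * (rho * Ev * expR (-1)) by ring.
apply: ler_wpM2l; first exact: ltW.
lra.
Qed.

Lemma aux_eq (R : realType) (a g rho Ev ex : R) : 0 < a -> g < 1 -> 0 < rho -> 0 < Ev ->
  rho * a * (Ev * expR (- ((1 - g) * (a * (ln (rho * Ev) - 1) / (1 - g)) / a)) * expR (-1))
  + (1 - g) * (ex + a * (ln (rho * Ev) - 1) / (1 - g))
  = a * ln (rho * Ev) + (1 - g) * ex.
Proof.
move=> ha hg hr hE.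
have y0 : 0 < rho * Ev by apply: mulr_gt0.
have hg1' : 1 - g != 0 by rewrite subr_eq0 gt_eqF.
have ha0 : a != 0 by rewrite gt_eqF.
have -> : - ((1 - g) * (a * (ln (rho * Ev) - 1) / (1 - g)) / a)
   = 1 - ln (rho * Ev) by field; apply/andP.
rewrite expRB lnK ?posrE //.
have En : Ev != 0 by rewrite gt_eqF.
have rn : rho != 0 by rewrite gt_eqF.
have e1 : expR 1 != 0 :> R by rewrite gt_eqF ?expR_gt0.
rewrite expRN invfM.
move: (ln _) (expR 1) e1 => l e e1.
field; by rewrite e1 En rn hg1'.
Qed.

Theorem lemma4 (R : realType) (S Ai Am : finType)
  (alpha gamma rho : R) (D : seq (sample S Ai Am)) (p0 : S -> R)
  (r : S -> Ai -> Am -> R) (pim : S -> Am -> R) (piD : S -> Ai -> Am -> R) :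
  0 < alpha -> 0 < gamma < 1 -> 0 < rho -> D != [::] -> is_distr p0 ->
  (* pi_{-i}(. | s) and pi^D_{-i}(. | s, a_i) are probability distributions *)
  (forall s, (forall am, 0 <= pim s am) /\ \sum_am pim s am = 1) ->
  (forall s ai, (forall am, 0 <= piD s ai am) /\ \sum_am piD s ai am = 1) ->
  (* positive on the samples of D *)
  (forall x, x \in D -> 0 < pim (s_of x) (am_of x)) ->
  (forall x, x \in D -> 0 < piD (s_of x) (ai_of x) (am_of x)) ->
  forall nustar : S -> R,
    (forall nu : S -> R,
       Ltilde alpha gamma rho D p0 r pim piD nustar
       <= Ltilde alpha gamma rho D p0 r pim piD nu) ->
    exists C : R, forall nu : S -> R,
      Lobj alpha gamma rho D p0 r pim piD (fun s => nustar s + C)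
      <= Lobj alpha gamma rho D p0 r pim piD nu.
Proof.
move=> ha /andP[hg0 hg1] hrho hD [_ hp0] _ _ _ _ nustar hmin.
have ha0 : alpha != 0 by rewrite gt_eqF.
set E := fun nu : S -> R =>
  emp_avg D (fun x => expR (ehat alpha gamma r pim piD nu x / alpha)).
have Epos : forall nu, 0 < E nu.
  move=> nu; rewrite /E /emp_avg; apply: divr_gt0; last first.
    by rewrite ltr0n lt0n size_eq0.
  have [x xD] : exists x, x \in D.
    by case: (D) hD => // y D' _; exists y; rewrite inE eqxx.
  rewrite (perm_big _ (perm_to_rem xD)) big_cons.
  apply: ltr_pwDl; first exact: expR_gt0.
  by apply: sumr_ge0 => y _; apply/ltW/expR_gt0.
have LobjE : forall nu, Lobj alpha gamma rho D p0 r pim piD nu =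
    rho * alpha * (E nu * expR (-1)) + (1 - gamma) * expect p0 nu.
  move=> nu; rewrite /Lobj /E /emp_avg; congr (_ * _ + _).
  rewrite mulrAC; congr (_ / _); rewrite big_distrl /=.
  by apply: eq_bigr => x _; rewrite expRD.
have LtE : forall nu, Ltilde alpha gamma rho D p0 r pim piD nu =
    alpha * ln (rho * E nu) + (1 - gamma) * expect p0 nu by [].
have expE : forall nu c, expect p0 (fun s => nu s + c) = expect p0 nu + c.
  move=> nu c; rewrite /expect.
  under eq_bigr do rewrite mulrDr.
  by rewrite big_split /= -big_distrl /= hp0 mul1r.
have Eshift : forall nu c, E (fun s => nu s + c) =
    E nu * expR (- ((1 - gamma) * c / alpha)).
  move=> nu c; rewrite /E /emp_avg mulrAC; congr (_ / _).
  rewrite big_distrl /=; apply: eq_bigr => x _; rewrite -expRD; congr expR.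
  rewrite /ehat; field; exact: ha0.
have le : forall nu, Ltilde alpha gamma rho D p0 r pim piD nu
    <= Lobj alpha gamma rho D p0 r pim piD nu.
  by move=> nu; rewrite LtE LobjE lerD2r; apply: aux_le.
exists (alpha * (ln (rho * E nustar) - 1) / (1 - gamma)) => nu.
apply: le_trans (le nu); apply: le_trans (hmin nu).
rewrite LobjE LtE expE Eshift.
by rewrite aux_eq.
Qed.
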